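(* Let $E=\begin{bmatrix}\widetilde E&0\\0&0\end{bmatrix}$ be a $(0,1,-1)$ matrix such that $E\mathbf 1=0$ and $\mathbf 1^TE=0^T$. Then $E$ is realizable if and only if $\widetilde E$ is realizable.
   Context: Two $(0,1)$ matrices $A,B$ are Gram mates if $AA^T=BB^T$, $A^TA=B^TB$ and $A\neq B$. A $(0,1,-1)$ matrix $F$ with $F\mathbf 1=0$ and $\mathbf 1^TF=0^T$ is realizable if there is a $(0,1)$ matrix $A$ such that $A$ and $A+F$ are Gram mates. *)

(* Defs.v *)
From HB Require Import structures.
From mathcomp Require Import all_boot all_order all_algebra.
Set Implicit Arguments. Unset Strict Implicit. Unset Printing Implicit Defensive.
Import GRing.Theory Num.Theory.
Local Open Scope ring_scope.

Definition is01 (m n : nat) (A : 'M[int]_(m, n)) : Prop :=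
  forall i j, A i j = 0 \/ A i j = 1.

Definition is01m1 (m n : nat) (F : 'M[int]_(m, n)) : Prop :=
  forall i j, F i j = 0 \/ F i j = 1 \/ F i j = -1.

Definition zero_line_sums (m n : nat) (F : 'M[int]_(m, n)) : Prop :=
  F *m (const_mx 1 : 'cV[int]_n) = 0 /\ (const_mx 1 : 'rV[int]_m) *m F = 0.

Definition gram_mates (m n : nat) (A B : 'M[int]_(m, n)) : Prop :=
  [/\ is01 A, is01 B, A *m A^T = B *m B^T, A^T *m A = B^T *m B & A <> B].

Definition realizable (m n : nat) (F : 'M[int]_(m, n)) : Prop :=
  [/\ is01m1 F, zero_line_sums F & exists A : 'M[int]_(m, n), gram_mates A (A + F)].

(* Main.v *)
Require Import Defs.
From HB Require Import structures.
From mathcomp Require Import all_boot all_order all_algebra.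
Local Open Scope ring_scope.
Import GRing.Theory.

Lemma zls (m1 m2 n1 n2 : nat) (Et : 'M[int]_(m1, n1)) :
  zero_line_sums (block_mx Et 0 0 0 : 'M[int]_(m1 + m2, n1 + n2)) -> zero_line_sums Et.
Proof.
case=> [H1 H2]; split.
  move: H1; rewrite -col_mx_const mul_block_col !mul0mx !addr0 -col_mx0.
  by move/eq_col_mx=> [].
move: H2; rewrite -row_mx_const mul_row_block !mulmx0 !addr0 -row_mx0.
by move/eq_row_mx=> [].
Qed.

Lemma i01 (m1 m2 n1 n2 : nat) (Et : 'M[int]_(m1, n1)) :
  is01m1 (block_mx Et 0 0 0 : 'M[int]_(m1 + m2, n1 + n2)) -> is01m1 Et.
Proof. by move=> H i j; have := H (lshift m2 i) (lshift n2 j); rewrite block_mxEul. Qed.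

Lemma ul01 (m1 m2 n1 n2 : nat) (A : 'M[int]_(m1 + m2, n1 + n2)) : is01 A -> is01 (ulsubmx A).
Proof. by move=> H i j; rewrite !mxE; apply: H. Qed.

Lemma blk01 (m1 m2 n1 n2 : nat) (A : 'M[int]_(m1, n1)) : is01 A -> is01 (block_mx A 0 0 0 : 'M[int]_(m1 + m2, n1 + n2)).
Proof.
move=> H i j; rewrite -[i](splitK) -[j]splitK.
case: (split i) => a; case: (split j) => b /=;
  rewrite ?block_mxEul ?block_mxEur ?block_mxEdl ?block_mxEdr ?mxE; auto.
Qed.

Theorem proposition4p3 (m1 m2 n1 n2 : nat) (Et : 'M[int]_(m1, n1)) :
  is01m1 (block_mx Et 0 0 0 : 'M[int]_(m1 + m2, n1 + n2)) ->
  zero_line_sums (block_mx Et 0 0 0 : 'M[int]_(m1 + m2, n1 + n2)) ->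
  (realizable (block_mx Et 0 0 0 : 'M[int]_(m1 + m2, n1 + n2)) <-> realizable Et).
Proof.
move=> H01 Hz; split.
  case=> _ _ [A [HA HB H1 H2 Hne]].
  split; [exact: i01 H01 | exact: zls Hz|].
  move: HA HB H1 H2 Hne; rewrite -(submxK A).
  set a := ulsubmx A; set b := ursubmx A; set c := dlsubmx A; set d := drsubmx A.
  clearbody a b c d => HA HB H1 H2 Hne.
  exists a; split.
  - by move: (@ul01 _ _ _ _ _ HA); rewrite block_mxKul.
  - by move: HB; rewrite add_block_mx !addr0 => /(@ul01 _ _ _ _ _); rewrite block_mxKul.
  - move: H1; rewrite add_block_mx !addr0 !tr_block_mx !mulmx_block.
    by case/eq_block_mx=> + _ _ _; move/(congr1 (fun X => X - b *m b^T)); rewrite !addrK.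
  - move: H2; rewrite add_block_mx !addr0 !tr_block_mx !mulmx_block.
    by case/eq_block_mx=> + _ _ _; move/(congr1 (fun X => X - c^T *m c)); rewrite !addrK.
  - move=> E; apply: Hne; rewrite add_block_mx !addr0.
    have -> : Et = 0 by apply: (@addrI _ a); rewrite addr0 -E.
    by rewrite addr0.
case=> _ _ [A [HA HB H1 H2 Hne]].
split => //.
exists (block_mx A 0 0 0); split.
- exact: (@blk01 _ _ _ _ _ HA).
- by rewrite add_block_mx !addr0; exact: (@blk01 _ _ _ _ _ HB).
- by rewrite add_block_mx !addr0 !tr_block_mx !mulmx_block ?linear0 ?trmx0 ?mulmx0 ?mul0mx ?addr0 ?H1.
- by rewrite add_block_mx !addr0 !tr_block_mx !mulmx_block ?linear0 ?trmx0 ?mulmx0 ?mul0mx ?addr0 ?H2.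
- rewrite add_block_mx !addr0 => /eq_block_mx [E _ _ _]; exact: Hne.
Qed.
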